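(* Let $N\ge1$, $\varphi,\gamma\in(0,1)$ with $\varphi+\gamma\ge1$, $\alpha=\min\{\varphi,\gamma\}$, and $\psi=\varphi/\gamma$ if $\varphi\le\gamma$, $\psi=\bar\varphi/\bar\gamma$ if $\varphi>\gamma$. Let $(X_t)_{t\ge0}$ be generated from $X_0$ and a sequence $(Z_t)_{t\ge1}$ of random elements of $\{0,1\}^N$ (independent of the uniforms) by the following rule: $(U(t,k))_{t,k}$ are i.i.d. Uniform$(0,1)$ and, independently for each $k\in[N]$, if $Z_t[k]=1$ then $X_t[k]=1$ iff $X_{t-1}[k]=0$ or ($X_{t-1}[k]=1$ and $U(t,k)\ge\bar\varphi/\gamma$); if $Z_t[k]=0$ and $\varphi\le\gamma$ then $X_t[k]=0$ iff $X_{t-1}[k]=0$ or ($X_{t-1}[k]=1$ and $U(t,k)\ge\psi$); if $Z_t[k]=0$ and $\varphi>\gamma$ then $X_t[k]=1$ iff $X_{t-1}[k]=1$ or ($X_{t-1}[k]=0$ and $U(t,k)\ge\psi$). Then for $t\in\mathbb{Z}_+$, conditional on $X_0$ and $(Z_\tau)_{\tau\le t}$, the coordinates of $X_t$ are independent and $X_t[k]$ is Bernoulli$(p_t[k])$ with $$p_t[k]=\varphi-(\gamma-\varphi)\sum_{l=1}^t\psi^l\prod_{j=t-l+1}^{t}\Big(1-\frac{Z_j[k]}{\alpha}\Big)-\big(\varphi-X_0[k]\big)\psi^t\prod_{j=1}^t\Big(1-\frac{Z_j[k]}{\alpha}\Big).$$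
   Context: $\bar a=1-a$; $[N]=\{1,\dots,N\}$; $\boldsymbol{x}[k]$ is the $k$-th coordinate of $\boldsymbol{x}\in\{0,1\}^N$. *)

(* Defs.v *)
From HB Require Import structures.
From mathcomp Require Import all_boot all_order all_algebra.
From mathcomp Require Import all_classical all_reals all_analysis.
Set Implicit Arguments. Unset Strict Implicit. Unset Printing Implicit Defensive.
Import Order.TTheory GRing.Theory Num.Theory.
Import numFieldNormedType.Exports.
Local Open Scope classical_set_scope.
Local Open Scope ring_scope.

Section Defs.
Variable R : realType.

Definition alpha (phi gam : R) : R := Num.min phi gam.

Definition psi (phi gam : R) : R :=
  if phi <= gam then phi / gam else (1 - phi) / (1 - gam).

(* One coordinate update: z = Z_t[k], xprev = X_{t-1}[k], u = U(t,k);
   returns X_t[k] (true = 1). *)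
Definition step (phi gam : R) (z xprev : bool) (u : R) : bool :=
  if z then (~~ xprev) || (xprev && ((1 - phi) / gam <= u))
  else if phi <= gam then
    ~~ ((~~ xprev) || (xprev && (psi phi gam <= u)))
  else
    xprev || ((~~ xprev) && (psi phi gam <= u)).

(* The process X_t (sample path at outcome w), from the initial state x0,
   the sequence z (z t = Z_t, t >= 1; z 0 unused) and the uniforms U. *)
Fixpoint Xproc {T : Type} (N : nat) (phi gam : R) (x0 : 'I_N -> bool)
  (z : nat -> 'I_N -> bool) (U : nat -> 'I_N -> T -> R) (t : nat) (w : T)
  : 'I_N -> bool :=
  match t with
  | 0 => x0
  | t'.+1 => fun k =>
      step phi gam (z t'.+1 k) (Xproc phi gam x0 z U t' w k) (U t'.+1 k w)
  end.

Definition ptk (N : nat) (phi gam : R) (x0 : 'I_N -> bool)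
  (z : nat -> 'I_N -> bool) (t : nat) (k : 'I_N) : R :=
  phi
  - (gam - phi) * \sum_(1 <= l < t.+1)
       (psi phi gam ^+ l *
        \prod_(t - l + 1 <= j < t.+1) (1 - (z j k)%:R / alpha phi gam))
  - (phi - (x0 k)%:R) * psi phi gam ^+ t *
       \prod_(1 <= j < t.+1) (1 - (z j k)%:R / alpha phi gam).

Definition iid_uniform01 {d} {T : measurableType d} (N : nat)
  (P : probability T R) (U : nat -> 'I_N -> T -> R) : Prop :=
  (forall t k, measurable_fun setT (U t k)) /\
  (forall t k (A : set R), measurable A ->
     P (U t k @^-1` A) = (@lebesgue_measure R) (A `&` `[0, 1]%classic)) /\
  (forall (s : seq (nat * 'I_N)) (B : nat * 'I_N -> set R),
     uniq s -> (forall i, measurable (B i)) ->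
     P (\bigcap_(i in [set i | i \in s]) (U i.1 i.2 @^-1` B i)) =
     (\prod_(i <- s) P (U i.1 i.2 @^-1` B i))%E).

End Defs.

(* Main.v *)
Require Import Defs.
From HB Require Import structures.
From mathcomp Require Import all_boot all_order all_algebra.
From mathcomp Require Import all_classical all_reals all_analysis.
From mathcomp Require Import ring lra.
Import Order.TTheory GRing.Theory Num.Theory.
Local Open Scope classical_set_scope.
Local Open Scope ring_scope.

Lemma czr (R : realType) (phi gam : R) (zz : bool) : 0 < phi < 1 -> 0 < gam < 1 -> 1 <= phi + gam ->
  0 <= (if zz then (1 - phi) / gam else psi phi gam) <= 1.
Proof.
move=> /andP[p0 p1] /andP[g0 g1] hs.
rewrite /psi; case: zz; [|case: ifPn => h]; apply/andP; split.
- by apply: divr_ge0; lra.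
- by rewrite ler_pdivrMr //; lra.
- by apply: divr_ge0; lra.
- by rewrite ler_pdivrMr //; lra.
- by apply: divr_ge0; lra.
- rewrite -ltNge in h; by rewrite ler_pdivrMr //; lra.
Qed.

Set Implicit Arguments. Unset Strict Implicit.
Section S.
Variables (R : realType) (d : measure_display) (T : measurableType d)
  (P : probability T R) (N : nat) (phi gam : R)
  (U : nat -> 'I_N -> T -> R) (x0 : 'I_N -> bool) (z : nat -> 'I_N -> bool).
Hypothesis hUm : forall t k, measurable_fun setT (U t k).
Hypothesis hUl : forall t k (A : set R), measurable A ->
     P (U t k @^-1` A) = (@lebesgue_measure R) (A `&` `[0, 1]%classic).
Hypothesis hUi : forall (s : seq (nat * 'I_N)) (B : nat * 'I_N -> set R),
     uniq s -> (forall i, measurable (B i)) ->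
     P (\bigcap_(i in [set i | i \in s]) (U i.1 i.2 @^-1` B i)) =
     (\prod_(i <- s) P (U i.1 i.2 @^-1` B i))%E.

Definition Ev t k b := [set w | Xproc phi gam x0 z U t w k = b].
Definition Uev (i : nat * 'I_N) (A : set R) := U i.1 i.2 @^-1` A.
Definition Upart s (B : nat * 'I_N -> set R) := \big[setI/setT]_(i <- s) Uev i (B i).
Definition pr (A : set T) := fine (P A).

Lemma mUev i A : measurable A -> measurable (Uev i A).
Proof. move=> mA; have := hUm i.1 i.2 measurableT mA; by rewrite setTI. Qed.

Lemma mUpart s B : (forall i, measurable (B i)) -> measurable (Upart s B).
Proof.
move=> mB; rewrite /Upart; elim: s => [|i s IH]; first by rewrite big_nil.
by rewrite big_cons; apply: measurableI => //; apply: mUev.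
Qed.

Lemma finP A : measurable A -> (P A)%E = (pr A)%:E.
Proof. by move=> mA; rewrite /pr fineK //; apply: fin_num_measure. Qed.

Lemma indepU s B : uniq s -> (forall i, measurable (B i)) ->
  pr (Upart s B) = \prod_(i <- s) pr (Uev i (B i)).
Proof.
move=> us mB; rewrite /Upart -bigcap_seq.
have := @hUi s B us mB; rewrite /pr => ->.
rewrite (eq_bigr (fun i => (pr (Uev i (B i)))%:E)); last first.
  by move=> i _; rewrite -finP //; apply: mUev.
by rewrite prodEFin.
Qed.

Definition C zz b' b := [set u : R | step phi gam zz b' u = b].

Lemma mthr (g : bool -> bool) (c : R) : measurable [set u : R | g (c <= u)].
Proof.
case Hg1: (g true); case Hg0: (g false).
- rewrite (_ : [set u | _] = setT) //; apply/seteqP; split=> u //= _.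
  by case: (c <= u).
- rewrite (_ : [set u | _] = `[c, +oo[%classic); first exact: measurable_itv.
  apply/seteqP; split=> u /=; rewrite in_itv /= andbT;
    case: (leP c u) => h; rewrite ?Hg1 ?Hg0 //.
- rewrite (_ : [set u | _] = `]-oo, c[%classic); first exact: measurable_itv.
  apply/seteqP; split=> u /=; rewrite in_itv /=;
    case: (leP c u) => h; rewrite ?Hg1 ?Hg0 //.
- rewrite (_ : [set u | _] = set0) //; apply/seteqP; split=> u //=.
  by case: (c <= u); rewrite ?Hg1 ?Hg0.
Qed.

Definition cz (zz : bool) := if zz then (1 - phi) / gam else psi phi gam.
Definition sb (zz b' q : bool) :=
  if zz then ~~ b' || b' && q
  else if phi <= gam then ~~ (~~ b' || b' && q) else b' || ~~ b' && q.

Lemma step_sb zz b' u : step phi gam zz b' u = sb zz b' (cz zz <= u).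
Proof. by rewrite /step /sb /cz; case: zz. Qed.

Lemma C_thr zz b' b : C zz b' b = [set u | (fun q => sb zz b' q == b) (cz zz <= u)].
Proof. by apply/seteqP; split=> u; rewrite /C /= step_sb => /eqP. Qed.

Lemma mC zz b' b : measurable (C zz b' b).
Proof. rewrite C_thr; exact: (mthr (fun q => sb zz b' q == b) (cz zz)). Qed.

Lemma set_cst (p : Prop) : measurable [set w : T | p].
Proof.
case: (pselect p) => h.
  by rewrite (_ : [set _ | p] = setT) //; apply/seteqP; split.
by rewrite (_ : [set _ | p] = set0) //; apply/seteqP; split.
Qed.

Lemma Ev_step t k b : Ev t.+1 k b =
  (Ev t k true `&` Uev (t.+1, k) (C (z t.+1 k) true b)) `|`
  (Ev t k false `&` Uev (t.+1, k) (C (z t.+1 k) false b)).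
Proof.
rewrite /Ev /Uev /C /=; apply/seteqP; split => w /=;
  case: (Xproc phi gam x0 z U t w k).
- by move=> h; left.
- by move=> h; right.
- by case=> [[_ h]|[]].
- by case=> [[]|[_ h]].
Qed.

Lemma mEv t k b : measurable (Ev t k b).
Proof.
elim: t b => [|t IH] b; first by rewrite /Ev /=; exact: set_cst.
rewrite Ev_step; apply: measurableU; apply: measurableI => //;
  apply: mUev; apply: mC.
Qed.

Lemma Ev_disj t k : Ev t k true `&` Ev t k false = set0.
Proof. by apply/seteqP; split => w //; rewrite /Ev /= => -[h1 h2]; rewrite h1 in h2. Qed.

Lemma split_step t k b Y : measurable Y ->
  pr (Ev t.+1 k b `&` Y) =
  pr (Ev t k true `&` (Y `&` Uev (t.+1, k) (C (z t.+1 k) true b))) +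
  pr (Ev t k false `&` (Y `&` Uev (t.+1, k) (C (z t.+1 k) false b))).
Proof.
move=> mY.
have E A B : A `&` B `&` Y = A `&` (Y `&` B) by rewrite -setIA [B `&` Y]setIC.
have mU b' : measurable (Uev (t.+1, k) (C (z t.+1 k) b' b)) by apply: mUev; apply: mC.
have mI b' : measurable (Ev t k b' `&` (Y `&` Uev (t.+1, k) (C (z t.+1 k) b' b))).
  by apply: measurableI; [apply: mEv | apply: measurableI].
rewrite Ev_step setIUl !E /pr measureU //.
- by rewrite fineD //; apply: fin_num_measure.
- apply/seteqP; split => w //; rewrite /Ev /= => -[[h1 _] [h2 _]]; by rewrite h1 in h2.
Qed.


Definition Rest (tt : 'I_N -> nat) (xs : 'I_N -> bool) (ks : seq 'I_N) :=
  \big[setI/setT]_(k <- ks) Ev (tt k) k (xs k).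
Definition Rhs tt xs ks s B :=
  (\prod_(k <- ks) pr (Ev (tt k) k (xs k))) * \prod_(i <- s) pr (Uev i (B i)).
Definition valid (ks : seq 'I_N) (tt : 'I_N -> nat) (s : seq (nat * 'I_N)) :=
  all (fun i : nat * 'I_N => (i.2 \in ks) ==> (tt i.2 < i.1)%N) s.

Lemma mRest tt xs ks : measurable (Rest tt xs ks).
Proof.
rewrite /Rest; elim: ks => [|k ks IH]; first by rewrite big_nil.
by rewrite big_cons; apply: measurableI => //; apply: mEv.
Qed.

Lemma prT : pr setT = 1.
Proof. by rewrite /pr probability_setT. Qed.

Lemma pr0 : pr set0 = 0.
Proof. by rewrite /pr measure0. Qed.

Lemma Upart_upd s B i0 A : i0 \notin s ->
  Upart s (fun i => if i == i0 then A else B i) = Upart s B.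
Proof.
move=> ni; rewrite /Upart; apply: eq_big_seq => i si.
by case: eqP => // e; rewrite -e si in ni.
Qed.

Lemma prod_upd s B i0 A : i0 \notin s ->
  \prod_(i <- s) pr (Uev i ((fun i => if i == i0 then A else B i) i)) =
  \prod_(i <- s) pr (Uev i (B i)).
Proof.
move=> ni; apply: eq_big_seq => i si /=.
by case: eqP => // e; rewrite -e si in ni.
Qed.

Lemma inner k t : forall ks tt xs, k \notin ks ->
 (forall s B, uniq s -> (forall i, measurable (B i)) -> valid ks tt s ->
    pr (Rest tt xs ks `&` Upart s B) = Rhs tt xs ks s B) ->
 forall b s B, uniq s -> (forall i, measurable (B i)) -> valid ks tt s ->
   all (fun i : nat * 'I_N => (i.2 == k) ==> (t < i.1)%N) s ->
 pr (Ev t k b `&` (Rest tt xs ks `&` Upart s B)) = pr (Ev t k b) * Rhs tt xs ks s B.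
Proof.
elim: t => [|t IH] ks tt xs nk Hout b s B us mB vs als.
  case: (eqVneq (x0 k) b) => h.
    rewrite (_ : Ev 0 k b = setT); last by apply/seteqP; split => w.
    by rewrite setTI prT mul1r Hout.
  rewrite (_ : Ev 0 k b = set0); last first.
    by apply/seteqP; split => w //; rewrite /Ev /= => e; rewrite e eqxx in h.
  by rewrite set0I pr0 mul0r.
set i0 := (t.+1, k).
set Cb := fun b' => C (z t.+1 k) b' b.
have key : forall (Y : set T) (F : R), measurable Y ->
  (forall b', pr (Ev t k b' `&` (Y `&` Uev i0 (Cb b'))) =
     pr (Ev t k b') * (pr (Uev i0 (Cb b')) * F)) ->
  pr (Ev t.+1 k b `&` Y) = (pr (Ev t k true) * pr (Uev i0 (Cb true)) +
     pr (Ev t k false) * pr (Uev i0 (Cb false))) * F.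
  by move=> Y F mY h; rewrite split_step // !h; ring.
have gen : forall ks' tt' xs', k \notin ks' ->
  (forall s B, uniq s -> (forall i, measurable (B i)) -> valid ks' tt' s ->
    pr (Rest tt' xs' ks' `&` Upart s B) = Rhs tt' xs' ks' s B) ->
  forall s' B', uniq s' -> (forall i, measurable (B' i)) -> valid ks' tt' s' ->
  all (fun i : nat * 'I_N => (i.2 == k) ==> (t.+1 < i.1)%N) s' ->
  forall b', pr (Ev t k b' `&` ((Rest tt' xs' ks' `&` Upart s' B') `&` Uev i0 (Cb b')))
    = pr (Ev t k b') * (pr (Uev i0 (Cb b')) * Rhs tt' xs' ks' s' B').
  move=> ks' tt' xs' nk' Hout' s' B' us' mB' vs' als' b'.
  have ni : i0 \notin s'.
    apply/negP => h; have := allP als' i0 h; by rewrite /= eqxx ltnn.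
  set B'' := fun i => if i == i0 then Cb b' else B' i.
  have E1 : (Rest tt' xs' ks' `&` Upart s' B') `&` Uev i0 (Cb b') =
      Rest tt' xs' ks' `&` Upart (i0 :: s') B''.
    rewrite [Upart (i0 :: s') _]/Upart big_cons -/(Upart s' B'') /B'' Upart_upd // eqxx.
    by rewrite -setIA [Upart _ _ `&` _]setIC.
  rewrite E1 IH //.
  - rewrite /Rhs big_cons /B'' eqxx prod_upd //; ring.
  - by rewrite /= ni.
  - by move=> i; rewrite /B''; case: eqP => _ //; apply: mC.
  - by rewrite /valid /= (negbTE nk') /=.
  - rewrite /= eqxx ltnSn /=; apply/allP => i si; have := allP als' i si.
    by case: (i.2 == k) => //= /ltnW.
have Hout0 : forall tt' xs' s B, uniq s -> (forall i, measurable (B i)) -> valid [::] tt' s ->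
    pr (Rest tt' xs' [::] `&` Upart s B) = Rhs tt' xs' [::] s B.
  by move=> tt' xs' s0 B0 us0 mB0 _; rewrite /Rest big_nil setTI indepU // /Rhs big_nil mul1r.
have rec : pr (Ev t.+1 k b) = pr (Ev t k true) * pr (Uev i0 (Cb true)) +
     pr (Ev t k false) * pr (Uev i0 (Cb false)).
  rewrite -[RHS]mulr1 -[Ev t.+1 k b]setIT; apply: key => // b'.
  have := @gen [::] tt xs isT (Hout0 tt xs) [::] B isT mB isT isT b'.
  by rewrite /Rest /Upart /Rhs !big_nil !setIT !mulr1.
rewrite (key _ (Rhs tt xs ks s B)).
- by rewrite rec.
- by apply: measurableI; [apply: mRest | apply: mUpart].
- by move=> b'; apply: gen.
Qed.


Lemma main_ind ks : forall tt xs s B, uniq ks -> uniq s ->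
  (forall i, measurable (B i)) -> valid ks tt s ->
  pr (Rest tt xs ks `&` Upart s B) = Rhs tt xs ks s B.
Proof.
elim: ks => [|k ks IH] tt xs s B uks us mB vs.
  by rewrite /Rest big_nil setTI indepU // /Rhs big_nil mul1r.
move: uks => /= /andP[nk uks].
rewrite /Rest big_cons -/(Rest tt xs ks) -setIA (inner (t:=tt k) nk) //.
- by rewrite /Rhs big_cons mulrA.
- by move=> s0 B0 us0 mB0 vs0; apply: IH.
- apply/allP => i si; have := allP vs i si; rewrite inE.
  by case: (i.2 \in ks); rewrite ?orbT.
- apply/allP => i si; have := allP vs i si; rewrite inE.
  by case: eqP => //= ->.
Qed.

Lemma indep_final t (S : {set 'I_N}) (x : 'I_N -> bool) :
  P (\bigcap_(k in [set k | k \in S]) Ev t k (x k)) =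
  (\prod_(k in S) pr (Ev t k (x k)))%:E.
Proof.
have -> : \bigcap_(k in [set k | k \in S]) Ev t k (x k) =
    Rest (fun _ => t) x (enum S) `&` Upart [::] (fun _ => setT).
  rewrite /Upart big_nil setIT /Rest -bigcap_seq.
  by apply: eq_bigcapl; split => k /=; rewrite mem_enum.
rewrite finP; last by apply: measurableI; [apply: mRest | apply: mUpart].
rewrite main_ind //; first by rewrite /Rhs big_nil mulr1 big_enum.
exact: enum_uniq.
Qed.


Definition bb j k := 1 - ((z j k)%:R : R) / alpha phi gam.

Lemma S_rec t k :
  \sum_(1 <= l < t.+2) (psi phi gam ^+ l * \prod_(t.+1 - l + 1 <= j < t.+2) bb j k) =
  psi phi gam * bb t.+1 k *
   (1 + \sum_(1 <= l < t.+1) (psi phi gam ^+ l * \prod_(t - l + 1 <= j < t.+1) bb j k)).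
Proof.
rewrite big_ltn // big_add1 /= subn1 /= addn1 big_nat1 [RHS]mulrDr mulr1 expr1.
congr (_ + _); rewrite big_distrr; apply: eq_big_nat => l /andP[l1 lt] /=.
rewrite subSS big_nat_recr /=; last by rewrite addn1 ltnS leq_subr.
by rewrite exprS; ring.
Qed.

Lemma ptk_rec t k : ptk phi gam x0 z t.+1 k =
  phi + psi phi gam * bb t.+1 k * (ptk phi gam x0 z t k - gam).
Proof.
rewrite /ptk.
rewrite (_ : \sum_(1 <= l < t.+2) _ = psi phi gam * bb t.+1 k *
   (1 + \sum_(1 <= l < t.+1) (psi phi gam ^+ l * \prod_(t - l + 1 <= j < t.+1) bb j k)));
  last exact: S_rec.
rewrite (big_nat_recr t.+1) //= exprS /bb; ring.
Qed.


Lemma prU i (g : bool -> bool) (c : R) : 0 <= c <= 1 ->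
  pr (Uev i [set u | g (c <= u)]) =
  (if g true then 1 - c else 0) + (if g false then c else 0).
Proof.
move=> /andP[c0 c1].
rewrite /pr /Uev hUl; last exact: mthr.
case Hg1: (g true); case Hg0: (g false).
- rewrite (_ : _ `&` _ = `[0, 1]%classic); last first.
    apply/seteqP; split=> u /=; first by case.
    by move=> h; split => //; case: (c <= u).
  rewrite lebesgue_measure_itv /= lte_fin ltr01 /=; lra.
- rewrite (_ : _ `&` _ = `[c, 1]%classic); last first.
    apply/seteqP; split=> u /=; rewrite !in_itv /=.
      by case: (leP c u) => h; rewrite ?Hg1 ?Hg0 // => -[] // _ /andP[_ ->].
    move=> /andP[cu u1]; rewrite cu Hg1; split => //.
    by rewrite u1 andbT (le_trans c0 cu).
  rewrite lebesgue_measure_itv /= lte_fin; case: ifPn => h /=; first lra.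
  rewrite -leNgt in h; lra.
- rewrite (_ : _ `&` _ = `[0, c[%classic); last first.
    apply/seteqP; split=> u /=; rewrite !in_itv /=.
      by case: (leP c u) => h; rewrite ?Hg1 ?Hg0 // => -[] // _ /andP[-> _].
    move=> /andP[u0 uc]; rewrite leNgt uc /= Hg0; split => //.
    by rewrite u0 /= (le_trans (ltW uc) c1).
  rewrite lebesgue_measure_itv /= lte_fin; case: ifPn => h /=; first lra.
  rewrite -leNgt in h; lra.
- rewrite (_ : _ `&` _ = set0); last first.
    apply/seteqP; split=> u //= [].
    by case: (c <= u); rewrite ?Hg1 ?Hg0.
  by rewrite measure0 /=; lra.
Qed.


Lemma prC t k : pr (Ev t k false) = 1 - pr (Ev t k true).
Proof.
have E : Ev t k true `|` Ev t k false = setT.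
  apply/seteqP; split => w // _; rewrite /Ev /=.
  by case: (Xproc phi gam x0 z U t w k); [left|right].
have := prT; rewrite -E /pr measureU ?mEv ?Ev_disj //.
have fT : P (Ev t k true) \is a fin_num by apply: fin_num_measure; apply: mEv.
have fF : P (Ev t k false) \is a fin_num by apply: fin_num_measure; apply: mEv.
have fD := fineD fT fF.
move=> h; rewrite -h.
rewrite (_ : fine (P (Ev t k true) + P (Ev t k false))%R = fine (P (Ev t k true)) + fine (P (Ev t k false))); first ring.
exact: fD.
all: apply: mEv.
Qed.

Lemma rec t k b : pr (Ev t.+1 k b) =
  pr (Ev t k true) * pr (Uev (t.+1, k) (C (z t.+1 k) true b)) +
  pr (Ev t k false) * pr (Uev (t.+1, k) (C (z t.+1 k) false b)).
Proof.
rewrite -[Ev t.+1 k b]setIT split_step // !setTI.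
have h b' : pr (Ev t k b' `&` Uev (t.+1, k) (C (z t.+1 k) b' b)) =
    pr (Ev t k b') * pr (Uev (t.+1, k) (C (z t.+1 k) b' b)).
  have := @main_ind [:: k] (fun _ => t) (fun _ => b') [:: (t.+1, k)]
    (fun _ => C (z t.+1 k) b' b) isT isT (fun _ => mC _ _ _)
    (ltac:(by rewrite /valid /= inE eqxx /= ltnSn)).
  by rewrite /Rest /Upart /Rhs !big_cons !big_nil !setIT !mulr1.
by rewrite !h.
Qed.

Lemma trans i zz b' : 0 <= cz zz <= 1 ->
  pr (Uev i (C zz b' true)) =
  (if sb zz b' true == true then 1 - cz zz else 0) +
  (if sb zz b' false == true then cz zz else 0).
Proof. by move=> h; rewrite C_thr (prU i (fun q => sb zz b' q == true)). Qed.

Hypotheses (hphi : 0 < phi < 1) (hgam : 0 < gam < 1) (hsum : 1 <= phi + gam).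

Lemma cz_range zz : 0 <= cz zz <= 1.
Proof. exact: czr. Qed.

Lemma prX t k : pr (Ev t k true) = ptk phi gam x0 z t k.
Proof.
case/andP: hphi => p0 p1; case/andP: hgam => g0 g1.
elim: t => [|t IH].
  rewrite /ptk !big_geq // expr0 mulr1 mulr0 subr0.
  rewrite /Ev /=; case: (x0 k) => /=.
    rewrite (_ : [set _ | true = true] = setT) ?prT /=; last by apply/seteqP; split.
    ring.
  rewrite (_ : [set _ | false = true] = set0) ?pr0 /=; last by apply/seteqP; split.
  ring.
rewrite rec prC IH ptk_rec !trans ?cz_range //.
set r := ptk phi gam x0 z t k.
have np : phi != 0 := lt0r_neq0 p0.
have ng : gam != 0 := lt0r_neq0 g0.
have ng1 : 1 - gam != 0 by rewrite lt0r_neq0 // subr_gt0.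
rewrite /bb /alpha /cz /sb /psi.
case: (z t.+1 k) => /=; case: (leP phi gam) => h /=.
- by field; rewrite np ng.
- by field; rewrite ?np ?ng ?ng1.
- by field; rewrite ?np ?ng ?ng1.
- by field; rewrite ?np ?ng ?ng1.
Qed.

End S.

Theorem proposition3 (R : realType) (d : measure_display) (T : measurableType d)
  (P : probability T R) (N : nat) (hN : (0 < N)%N) (phi gam : R)
  (hphi : 0 < phi < 1) (hgam : 0 < gam < 1) (hsum : 1 <= phi + gam)
  (U : nat -> 'I_N -> T -> R) (hU : iid_uniform01 P U)
  (x0 : 'I_N -> bool) (z : nat -> 'I_N -> bool) :
  forall (t : nat) (S : {set 'I_N}) (x : 'I_N -> bool),
    P (\bigcap_(k in [set k | k \in S])
          [set w | Xproc phi gam x0 z U t w k = x k]) =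
    (\prod_(k in S) (if x k then ptk phi gam x0 z t k
                     else 1 - ptk phi gam x0 z t k))%:E.
Proof.
move=> t S x.
case: hU => hUm [hUl hUi].
have := @indep_final R d T P N phi gam U x0 z hUm hUi t S x.
rewrite /Ev => ->; congr EFin; apply: eq_bigr => k _.
have hX := @prX R d T P N phi gam U x0 z hUm hUl hUi hphi hgam hsum t k.
have hC := @prC R d T P N phi gam U x0 z hUm t k.
by case: (x k); rewrite ?hC hX.
Qed.
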